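(* Consider an instance of \textsc{Min-Lin-Eq$(q)$-Full} on the complete graph with $n$ vertices and $m=\binom n2$ edges, let $\mathrm{OPT_{val}}$ be its optimal value, let $\varepsilon=\mathrm{OPT_{val}}/m$ and assume $\varepsilon<\frac12$. Let $\nu=2/(1-2\varepsilon)$. Then the Voting Algorithm returns an assignment with at most $(\varepsilon+2\varepsilon^2\nu(2+\nu)+o(1))\,m$ unsatisfied constraints (where $o(1)$ is with respect to $n\to\infty$).
   Context: \textsc{Min-Lin-Eq$(q)$-Full}: given a complete simple graph $G=(V,E)$, $n=|V|$, $m=\binom n2$, a positive integer $q$, and for each ordered pair $(u,v)$ of distinct vertices an integer $c_{uv}\in\{0,\dots,q-1\}$ with $c_{vu}\equiv -c_{uv}\pmod q$, each edge $uv$ carries the constraint $x_u-x_v\equiv c_{uv}\pmod q$ on assignments $x:V\to\{0,\dots,q-1\}$; the goal is to minimize the number of violated constraints, whose minimum is $\mathrm{OPT_{val}}$. Voting Algorithm: for each choice of pivot $p\in V$: (1) label $p$ with $0$ and give each vertex $v\neq p$ the temporary label $\mathrm{TEMP}(v)=c_{vp}$; (2) for each vertex $v$, every vertex $u\notin\{p,v\}$ casts the vote $(c_{vu}+\mathrm{TEMP}(u))\bmod q$ for $v$; (3) each vertex $v$ receives as final label $\mathrm{FINAL}(v)$ a label occurring most often among its votes (ties broken arbitrarily). (4) Output, among all choices of $p$, the FINAL assignment violating the fewest constraints. *)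

(* Defs.v *)
From mathcomp Require Import all_boot all_order all_algebra.
Unset Printing Implicit Defensive.
Import Order.TTheory GRing.Theory Num.Theory.

(* An instance of Min-Lin-Eq(q)-Full on the complete graph with vertex set 'I_n:
   c u v is the right-hand side c_{uv} of the constraint x_u - x_v = c_{uv} (mod q). *)
Definition valid_instance (n q : nat) (c : 'I_n -> 'I_n -> nat) : Prop :=
  0 < q /\
  (forall u v : 'I_n, u != v -> c u v < q) /\
  (forall u v : 'I_n, u != v -> (c u v + c v u) %% q = 0).

Definition sat_edge (n q : nat) (c : 'I_n -> 'I_n -> nat) (x : 'I_n -> 'I_q)
  (u v : 'I_n) : bool := x u == x v + c u v %[mod q].

Definition nviol (n q : nat) (c : 'I_n -> 'I_n -> nat) (x : 'I_n -> 'I_q) : nat :=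
  #|[set e : 'I_n * 'I_n | (e.1 < e.2) && ~~ sat_edge n q c x e.1 e.2]|.

Definition opt_val (n q : nat) (c : 'I_n -> 'I_n -> nat) : nat :=
  \big[minn/'C(n, 2)]_(x : {ffun 'I_n -> 'I_q}) nviol n q c x.

(* number of votes for label a received by v, with pivot p:
   u (u <> p, u <> v) votes (c_vu + TEMP(u)) mod q, where TEMP(u) = c_up *)
Definition votes (n q : nat) (c : 'I_n -> 'I_n -> nat) (p v : 'I_n) (a : 'I_q) : nat :=
  #|[set u : 'I_n | [&& u != p, u != v & (c v u + c u p) %% q == a]]|.

(* FINAL is a legal outcome of steps (1)-(3) for pivot p (arbitrary tie breaking):
   each vertex gets a most frequent label among its votes *)
Definition is_final (n q : nat) (c : 'I_n -> 'I_n -> nat) (p : 'I_n)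
  (F : 'I_n -> 'I_q) : Prop :=
  forall (v : 'I_n) (a : 'I_q), votes n q c p v a <= votes n q c p v (F v).

Definition voting_output (n q : nat) (c : 'I_n -> 'I_n -> nat) (y : 'I_n -> 'I_q) : Prop :=
  exists F : 'I_n -> 'I_n -> 'I_q,
    (forall p, is_final n q c p (F p)) /\
    exists p0, y = F p0 /\ forall p, nviol n q c (F p0) <= nviol n q c (F p).

(* Main.v *)
Require Import Defs.
From mathcomp Require Import all_boot all_order all_algebra.
From mathcomp Require Import zify lra ring.
Import Order.TTheory GRing.Theory Num.Theory.

Section Comb.
Variables (n q : nat) (c : 'I_n -> 'I_n -> nat).
Hypothesis hv : valid_instance n q c.

Local Notation sat y v u := (sat_edge n q c y v u).

Lemma q_gt0 : 0 < q. Proof. by case: hv. Qed.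

Lemma sat_imp (y : 'I_n -> 'I_q) u v : u != v -> sat y u v -> sat y v u.
Proof.
move=> uv; rewrite /sat_edge => /eqP H; apply/eqP.
rewrite -modnDml H modnDml -addnA -modnDmr.
have [_ [_ h]] := hv; by rewrite (h u v uv) addn0.
Qed.

Lemma sat_sym (y : 'I_n -> 'I_q) u v : u != v -> sat y u v = sat y v u.
Proof. by move=> uv; apply/idP/idP; apply: sat_imp; rewrite // eq_sym. Qed.

Definition bado (y : 'I_n -> 'I_q) (v u : 'I_n) : nat := (u != v) && ~~ sat y v u.

Lemma bado_sym y v u : bado y v u = bado y u v.
Proof.
rewrite /bado; case: (eqVneq u v) => [->|uv] //=.
by rewrite sat_sym // eq_sym.
Qed.

Lemma bado_le1 y v u : bado y v u <= 1.
Proof. by rewrite /bado; case: (_ && _). Qed.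

Lemma nviolE y : nviol n q c y = \sum_(v : 'I_n) \sum_(u : 'I_n) ((v < u) && ~~ sat y v u : nat).
Proof.
rewrite /nviol -sum1_card big_mkcond pair_big /=.
by apply: eq_bigr => -[a b] _; rewrite inE /=; case: (_ && _).
Qed.

Lemma sum_bado y : \sum_(v : 'I_n) \sum_(u : 'I_n) bado y v u = 2 * nviol n q c y.
Proof.
have E v u : bado y v u = ((v < u) && ~~ sat y v u : nat) + ((u < v) && ~~ sat y u v : nat).
  rewrite /bado; case: (ltngtP v u) => h /=.
  - have -> : u != v by rewrite -val_eqE /= gtn_eqF.
    by rewrite addn0.
  - have uv : u != v by rewrite -val_eqE /= ltn_eqF.
    by rewrite uv /= sat_sym // eq_sym.
  - have -> : u == v by rewrite -val_eqE /= h.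
    by [].
under eq_bigr do under eq_bigr do rewrite E.
rewrite (eq_bigr (fun v : 'I_n => \sum_(u : 'I_n) ((v < u) && ~~ sat y v u : nat) + \sum_(u : 'I_n) ((u < v) && ~~ sat y u v : nat))); last by move=> v _; rewrite big_split.
rewrite big_split /= [X in _ + X]exchange_big /= -nviolE.
by rewrite mul2n addnn.
Qed.


Section Pivot.
Variables (x F : 'I_n -> 'I_q) (p : 'I_n).
Hypothesis hF : is_final n q c p F.

Definition L (v : 'I_n) : 'I_q := Ordinal (ltn_pmod (x v + (q - x p)) q_gt0).

Lemma Lxp w : (L w + x p) %% q = x w %% q.
Proof.
rewrite /= modnDml -addnA subnK; last exact: ltnW (ltn_ord _).
by rewrite modnDr.
Qed.

Lemma Lmod w a : (a + x p == x w %[mod q]) = (a == L w %[mod q]).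
Proof. by rewrite -(eqn_modDr (x p) a (L w) q) Lxp. Qed.

Lemma L_sat u v : sat L u v = sat x u v.
Proof.
rewrite /sat_edge -(eqn_modDr (x p)) Lxp addnAC -modnDml Lxp modnDml.
by [].
Qed.

Definition voter (v u : 'I_n) : bool := (u != p) && (u != v).
Definition vote (v u : 'I_n) : nat := (c v u + c u p) %% q.

Lemma vote_ok v u : sat x v u -> sat x u p -> vote v u = L v.
Proof.
move=> /eqP h1 /eqP h2.
have : (c v u + c u p == L v %[mod q]).
  rewrite -Lmod -addnA (addnC (c u p)) -modnDmr -h2 modnDmr addnC.
  by apply/eqP.
by move/eqP; rewrite /vote => ->; rewrite modn_small.
Qed.

Lemma Lu_char u : sat x u p -> (L u == c u p %[mod q]).
Proof. by move=> h; rewrite eq_sym -Lmod addnC eq_sym. Qed.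

Lemma votesE v (a : 'I_q) : votes n q c p v a = \sum_(u : 'I_n) (voter v u && (vote v u == a) : nat).
Proof.
rewrite /votes -sum1_card big_mkcond; apply: eq_bigr => u _.
by rewrite inE andbA; case: (_ && _ && _).
Qed.

Definition W v (a : nat) := \sum_(u : 'I_n) (voter v u && (vote v u != a) : nat).
Definition Nv v := \sum_(u : 'I_n) (voter v u : nat).
Definition d (v : 'I_n) := \sum_(u : 'I_n) bado x v u.

Lemma votesW v (a : 'I_q) : votes n q c p v a + W v a = Nv v.
Proof.
rewrite votesE -big_split; apply: eq_bigr => u _.
by case: (voter v u); case: (vote v u == a).
Qed.

Lemma WL v : W v (L v) <= d v + d p.
Proof.
rewrite /d -big_split; apply: leq_sum => u _.
case hvu: (voter v u) => //=.
case h: (vote v u != L v) => //=.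
move/andP: hvu => [up uv].
rewrite /bado uv up /=.
case s1: (sat x v u); case s2: (sat x p u) => //=.
move: h; rewrite vote_ok ?eqxx // sat_sym // s2.
Qed.

Lemma WF_WL v : W v (F v) <= W v (L v).
Proof.
have h1 := votesW v (F v); have h2 := votesW v (L v); have h3 := hF v (L v).
lia.
Qed.

Lemma sum_eq1 (a : 'I_n) : \sum_(u : 'I_n) (u == a : nat) = 1.
Proof.
rewrite (bigD1 a) //= eqxx big1 // => u /negPf ->; done.
Qed.

Lemma Nv_ge v : n <= Nv v + 2.
Proof.
have -> : n = \sum_(u : 'I_n) 1 by rewrite sum1_card card_ord.
have -> : Nv v + 2 = \sum_(u : 'I_n) ((voter v u : nat) + (u == p) + (u == v)).
  by rewrite !big_split /= !sum_eq1 -addnA.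
apply: leq_sum => u _; rewrite /voter.
by case: (u == p); case: (u == v).
Qed.

Lemma isB_bound v : F v != L v -> n <= 2 * (d v + d p) + 2.
Proof.
move=> FL.
have h : votes n q c p v (L v) + votes n q c p v (F v) <= Nv v.
  rewrite !votesE -big_split; apply: leq_sum => u _.
  case: (voter v u) => //=.
  case e1: (vote v u == L v); case e2: (vote v u == F v) => //=.
  move/eqP: e1 => e1; move/eqP: e2 => e2.
  have FLe : F v = L v by apply: ord_inj; rewrite -e1 -e2.
  by rewrite FLe eqxx in FL.
have h2 := votesW v (L v); have h3 := hF v (L v); have h4 := WL v; have h5 := Nv_ge v.
lia.
Qed.


Definition isB v : bool := F v != L v.
Definition k := \sum_(v : 'I_n) (isB v : nat).

Lemma sumF_L v u : ~~ isB v -> ~~ isB u -> bado F v u = bado x v u.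
Proof.
rewrite /isB !negbK => /eqP Fv /eqP Fu.
have e : sat F v u = sat L v u by rewrite /sat_edge Fv Fu.
by rewrite /bado e L_sat.
Qed.

Lemma cross v : \sum_(u : 'I_n) ((~~ isB u : nat) * bado F v u) <= 1 + W v (F v) + d p.
Proof.
rewrite -(sum_eq1 p) /d /W -!big_split /=; apply: leq_sum => u _.
have b1 : (~~ isB u : nat) * bado F v u <= 1.
  by case: (~~ isB u); rewrite ?mul1n ?mul0n ?bado_le1.
case: (eqVneq u p) => [up|up].
  apply: (leq_trans b1) => /=; lia.
case isBu: (isB u); first by rewrite mul0n.
rewrite mul1n.
move/negbT: isBu; rewrite /isB negbK => /eqP Fu.
case: (eqVneq u v) => [->|uv]; first by rewrite /bado eqxx.
rewrite /voter up uv /=.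
case s: (sat x p u); last by have := bado_le1 F v u; rewrite /bado up s /=; lia.
case hv': (vote v u != F v); first by have := bado_le1 F v u; rewrite /=; lia.
move/negbT: hv'; rewrite negbK => /eqP hv'.
have Lu := Lu_char u; rewrite sat_sym // s in Lu; have := Lu isT => /eqP Lu'.
rewrite /bado; have -> : sat F v u.
  rewrite /sat_edge Fu -modnDml Lu' modnDml -hv' /vote modn_mod addnC.
  by [].
by rewrite andbF.
Qed.

Lemma big_main : \sum_(v : 'I_n) \sum_(u : 'I_n) bado F v u <=
  \sum_(v : 'I_n) \sum_(u : 'I_n) bado x v u + 2 * (k * k) + 2 * (k * (1 + 2 * d p)).
Proof.
pose B v := (isB v : nat); pose nB v := (~~ isB v : nat).
pose T1 := \sum_(v : 'I_n) \sum_(u : 'I_n) nB v * nB u * bado x v u.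
pose T2 := \sum_(v : 'I_n) \sum_(u : 'I_n) B v * B u.
pose T3 := \sum_(v : 'I_n) \sum_(u : 'I_n) B v * nB u * bado F v u.
pose T4 := \sum_(v : 'I_n) \sum_(u : 'I_n) B u * nB v * bado F v u.
pose Y := \sum_(v : 'I_n) \sum_(u : 'I_n) B v * bado x v u.
pose Y' := \sum_(v : 'I_n) \sum_(u : 'I_n) B u * bado x v u.
have h1 : \sum_(v : 'I_n) \sum_(u : 'I_n) bado F v u <= T1 + T2 + T3 + T4.
  rewrite /T1 /T2 /T3 /T4 -!big_split; apply: leq_sum => v _.
  rewrite -!big_split; apply: leq_sum => u _.
  have b1 := bado_le1 F v u; have b2 := bado_le1 x v u.
  rewrite /B /nB; case Bv: (isB v); case Bu: (isB u) => /=; try lia.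
  rewrite sumF_L ?Bv ?Bu //; lia.
have h2 : T4 = T3.
  rewrite /T4 exchange_big; apply: eq_bigr => v _; apply: eq_bigr => u _.
  by rewrite bado_sym.
have h3 : T3 <= k * (1 + 2 * d p) + Y.
  have -> : Y = \sum_(v : 'I_n) B v * d v.
    by apply: eq_bigr => v _; rewrite /d big_distrr.
  rewrite /k big_distrl -big_split; apply: leq_sum => v _.
  have -> : \sum_(u : 'I_n) B v * nB u * bado F v u = B v * \sum_(u : 'I_n) nB u * bado F v u.
    by rewrite big_distrr; apply: eq_bigr => u _; rewrite /= mulnA.
  rewrite /= -mulnDr; apply: leq_mul => //.
  have := cross v; have := WF_WL v; have := WL v; rewrite /nB => ha hb hc; apply: leq_trans hc _; lia.
have h4 : Y' = Y.
  rewrite /Y' exchange_big; apply: eq_bigr => v _; apply: eq_bigr => u _.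
  by rewrite bado_sym.
have h5 : T1 + Y + Y' <= \sum_(v : 'I_n) \sum_(u : 'I_n) bado x v u + T2.
  rewrite /T1 /Y /Y' /T2 -!big_split; apply: leq_sum => v _.
  rewrite -!big_split; apply: leq_sum => u _.
  have b2 := bado_le1 x v u.
  rewrite /B /nB; case: (isB v); case: (isB u) => /=; lia.
have h6 : T2 = k * k.
  rewrite /T2 /k big_distrl; apply: eq_bigr => v _.
  by rewrite big_distrr.
move: h1 h2 h3 h4 h5 h6.
move: (\sum_(v : 'I_n) \sum_(u : 'I_n) bado F v u) (\sum_(v : 'I_n) \sum_(u : 'I_n) bado x v u) (k * k) (k * (1 + 2 * d p)) T1 T2 T3 T4 Y Y'.
move=> *; lia.
Qed.

Lemma B_bound : k * n <= 2 * (\sum_(v : 'I_n) d v) + 2 * (k * d p) + 2 * k.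
Proof.
have h1 : k * n <= \sum_(v : 'I_n) (2 * ((isB v : nat) * d v) + (isB v : nat) * (2 * d p + 2)).
  rewrite /k big_distrl; apply: leq_sum => v _.
  case Bv: (isB v) => /=; last by [].
  have := isB_bound v Bv; lia.
have h2 : \sum_(v : 'I_n) ((isB v : nat) * d v) <= \sum_(v : 'I_n) d v.
  by apply: leq_sum => v _; case: (isB v); rewrite ?mul1n ?mul0n.
move: h1; rewrite big_split /= -big_distrr -big_distrl /= -/k.
move: h2; move: (\sum_(v : 'I_n) ((isB v : nat) * d v)) (\sum_(v : 'I_n) d v) => a b.
nia.
Qed.

Lemma k_le : k <= n.
Proof.
apply: (@leq_trans (\sum_(v : 'I_n) 1)); first by apply: leq_sum => v _; case: (isB v).
by rewrite sum1_card card_ord.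
Qed.

End Pivot.
End Comb.

Section Extra.
Variables (n q : nat) (c : 'I_n -> 'I_n -> nat).
Hypothesis hv : valid_instance n q c.

Lemma nviol_le (y : 'I_n -> 'I_q) : nviol n q c y <= 'C(n, 2).
Proof.
pose S := [set e : 'I_n * 'I_n | e.1 < e.2].
apply: (@leq_trans #|S|).
  apply: subset_leq_card; apply/subsetP => e; rewrite !inE => /andP[] //.
have inj : {in S &, injective (fun e : 'I_n * 'I_n => [set e.1; e.2])}.
  move=> [a1 b1] [a2 b2]; rewrite !inE /= => h1 h2 E.
  have m1 : a1 \in [set a2; b2] by rewrite -E !inE eqxx.
  have m2 : b1 \in [set a2; b2] by rewrite -E !inE eqxx orbT.
  have m3 : a2 \in [set a1; b1] by rewrite E !inE eqxx.
  rewrite !inE in m1 m2 m3.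
  move: m1 m2 m3 => /orP[]/eqP e1 /orP[]/eqP e2 /orP[]/eqP e3; subst;
    try by []; exfalso; lia.
have cd := card_draws ('I_n) 2; rewrite card_ord in cd; rewrite -(card_in_imset inj) -cd.
apply: subset_leq_card; apply/subsetP => A /imsetP [[a b]]; rewrite inE /= => ab ->.
have ab' : a != b by rewrite neq_ltn ab.
by rewrite inE cards2 ab'.
Qed.

Lemma opt_ex : exists x : {ffun 'I_n -> 'I_q}, nviol n q c x <= opt_val n q c.
Proof.
rewrite /opt_val; apply: (big_ind (fun r => exists x : {ffun 'I_n -> 'I_q}, nviol n q c x <= r)).
- by exists [ffun=> Ordinal (@q_gt0 n q c hv)]; apply: nviol_le.
- move=> r1 r2 [x1 h1] [x2 h2]; case: (leqP r1 r2) => h.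
    by exists x1.
  by exists x2.
- by move=> x _; exists x.
Qed.

End Extra.

Section RatPart.
Local Open Scope ring_scope.
Lemma bin2_rat (n : nat) : ('C(n, 2))%:R = (n%:R * (n%:R - 1) / 2 : rat).
Proof.
have h : ('C(n, 2) * 2 = n * n.-1)%N by rewrite -(ffactn1 n.-1) -ffactnS -bin_ffact.
case: n h => [|n] h; first by rewrite bin0n !mul0r.
have -> : ('C(n.+1, 2))%:R = (('C(n.+1, 2) * 2)%N%:R / 2 : rat) by rewrite natrM mulfK.
by rewrite h natrM /= -addn1 natrD addrK.
Qed.

End RatPart.
Section RatFinal.
Local Open Scope ring_scope.
Lemma final_ineq (n V D O s k d m E : rat) :
 7 <= n -> 66 <= d * (n - 1) -> 0 <= D -> D <= O -> 0 <= s -> 0 <= k -> k <= n ->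
 V <= D + k^+2 + k*(1+2*s) -> n*s <= 2*D -> k*(n-2) <= 4*D + 2*k*s ->
 m = n*(n-1)/2 -> O = E * m -> 0 <= E -> E < 1/2 -> V <= m ->
 V <= (E + 2*E^+2*(2/(1-2*E))*(2 + 2/(1-2*E)) + d) * m.
Proof.
move=> n7 hd D0 DO s0 k0 kn hV hs hk hm hO E0 E2 Vm.
set t := 1 - 2 * E.
have t0 : 0 < t by rewrite /t; lra.
set nu := 2 / t.
have hnu : nu * t = 2 by rewrite /nu (mulfVK (lt0r_neq0 t0)).
have nu0 : 0 < nu by rewrite /nu divr_gt0.
have hm2 : 2 * m = n * (n - 1) by rewrite hm; field.
have m0 : 0 < m by nra.
case: (lerP (1/4) E) => hE4.
  have t2 : t <= 1/2 by rewrite /t; lra.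
  have nu4 : 4 <= nu by nra.
  have : 1 <= E + 2 * E ^+ 2 * nu * (2 + nu) + d.
    have d0 : 0 <= d by nra.
    have : 3 <= 2 * E ^+ 2 * nu * (2 + nu).
      have e2 : 1/16 <= E^+2 by rewrite expr2; nra.
      have : 24 <= nu * (2 + nu) by nra.
      nra.
    lra.
  move=> h1; apply: (le_trans Vm); rewrite -{1}[m]mul1r; apply: ler_wpM2r; [exact: ltW m0 | exact: h1].
have t2 : 1/2 < t by rewrite /t; lra.
have sE : s <= E * (n - 1).
  have : n * s <= n * (E * (n - 1)) by nra.
  have n0 : 0 < n by lra.
  by rewrite (ler_pM2l n0).
set K0 := nu * E * n.
have nuE : nu * E <= 1.
  have : nu * E * t <= 1 * t by rewrite -mulrA [E * t]mulrC mulrA hnu; lra.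
  by rewrite (ler_pM2r t0).
have K0n : K0 <= n by rewrite /K0; nra.
have K00 : 0 <= K0 by rewrite /K0; nra.
have hK0t : K0 * t = 2 * E * n by rewrite /K0 -hnu; ring.
have hk2 : k * (t * (n - 1) - 1) <= K0 * t * (n - 1).
  have h1 : 4 * D <= 2 * E * n * (n - 1) by nra.
  have h2 : 2 * k * s <= 2 * k * (E * (n - 1)) by nra.
  have -> : k * (t * (n - 1) - 1) = k * (n - 2) - 2 * k * (E * (n - 1)) by rewrite /t; ring.
  rewrite hK0t; lra.
have kK : k <= K0 + 4.
  have g0 : 0 < t * (n - 1) - 1 by nra.
  have h3 : (K0 + 4) * (t * (n - 1) - 1) = K0 * t * (n - 1) - K0 + 4 * (t * (n - 1) - 1) by ring.
  have h4 : K0 + 4 - 4 * (t * (n - 1)) <= 0 by nra.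
  have : k * (t * (n - 1) - 1) <= (K0 + 4) * (t * (n - 1) - 1) by lra.
  by rewrite (ler_pM2r g0).
set P := K0 ^+ 2 + 2 * E * n * K0.
have hmain : 2 * E ^+ 2 * nu * (2 + nu) * m * n = P * (n - 1).
  by rewrite /P /K0 hm; field.
have P1 : P <= 3/2 * n ^+ 2.
  have : K0 ^+ 2 <= n ^+ 2 by rewrite !expr2; nra.
  have : 2 * E * n * K0 <= 1/2 * n * n.
    have h : E * K0 <= 1/4 * n by clear -hE4 K0n K00 n7 E0; nra.
    have -> : 2 * E * n * K0 = 2 * n * (E * K0) by ring.
    clear -h n7; nra.
  rewrite /P expr2; lra.
have dm : 33 * n <= d * m.
  have : 2 * (d * m) = n * (d * (n - 1)) by rewrite mulrCA hm2; ring.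
  clear -hd n7; nra.
have hk3 : k ^+ 2 <= (K0 + 4) ^+ 2 by rewrite !expr2; clear -k0 kK; nra.
have hk4 : k * (1 + 2 * s) <= (K0 + 4) * (1 + 2 * E * n).
  apply: ler_pM; [exact: k0 | by clear -s0; lra | exact: kK | ].
  have : E * (n - 1) <= E * n by clear -E0; nra.
  clear -sE; lra.
have X1 : P - 3/2 * n <= 2 * E ^+ 2 * nu * (2 + nu) * m.
  have : (P - 3/2 * n) * n <= 2 * E ^+ 2 * nu * (2 + nu) * m * n by rewrite hmain; clear -P1; nra.
  have n0 : 0 < n by clear -n7; lra.
  by rewrite (ler_pM2r n0).
have X2 : (K0 + 4) ^+ 2 + (K0 + 4) * (1 + 2 * E * n) = P + 9 * K0 + 20 + 8 * E * n.
  by rewrite /P; ring.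
have X3 : E * n <= n / 4 by clear -hE4 n7; nra.
rewrite !mulrDl.
clear -X1 X2 X3 hk3 hk4 hV DO hO K0n dm n7; lra.
Qed.
End RatFinal.

Local Open Scope ring_scope.

Theorem lemma1 :
  forall delta : rat, 0 < delta ->
  exists N : nat, forall (n : nat), (N <= n)%N ->
  forall (q : nat) (c : 'I_n -> 'I_n -> nat), valid_instance n q c ->
  let m : rat := ('C(n, 2))%:R in
  let eps : rat := (opt_val n q c)%:R / m in
  eps < 1 / 2 ->
  let nu : rat := 2 / (1 - 2 * eps) in
  forall y : 'I_n -> 'I_q, voting_output n q c y ->
  (nviol n q c y)%:R <= (eps + 2 * eps ^+ 2 * nu * (2 + nu) + delta) * m.
Proof.
move=> delta hd.
have hb : 1 / delta < (Num.Def.archi_bound (1 / delta))%:R.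
  by apply: archi_boundP; rewrite divr_ge0 // ltW.
move: hb; set b := Num.Def.archi_bound (1 / delta) => hb.
exists (66 * b + 7)%N.
move=> n hn q c hv m eps heps nu y [F [hFin [p0 [-> hmin]]]].
have n7 : (7 <= n)%N by lia.
have n0 : (0 < n)%N by lia.
have [x hx] := @opt_ex n q c hv.
pose i0 := Ordinal n0.
pose p := [arg min_(i < i0) d n q c x i].
have hp : forall v, (d n q c x p <= d n q c x v)%N.
  by rewrite /p; case: arg_minnP => //= i _ h v; exact: h.
have hV1 := hmin p.
have hbm := @big_main n q c hv x (F p) p (hFin p).
rewrite !(@sum_bado n q c hv) in hbm.
have hBB := @B_bound n q c hv x (F p) p (hFin p).
have sd : (\sum_(v : 'I_n) d n q c x v = 2 * nviol n q c x)%N by exact: (@sum_bado n q c hv x).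
rewrite sd in hBB.
have hnd : (n * d n q c x p <= 2 * nviol n q c x)%N.
  rewrite -sd; have : (\sum_(v : 'I_n) d n q c x p <= \sum_(v : 'I_n) d n q c x v)%N.
    by apply: leq_sum => v _; exact: hp v.
  by rewrite sum_nat_const card_ord.
have hk := @k_le n q c hv x (F p) p.
have hVle := @nviol_le n q c (F p0).
move: hV1 hbm hBB hnd hk hVle hx.
set V := nviol n q c (F p0); set V' := nviol n q c (F p); set D := nviol n q c x.
set K := k n q c hv x (F p) p; set s := d n q c x p; set O := opt_val n q c.
move=> hV1 hbm hBB hnd hk hVle hx.
have nV : (V <= D + K * K + K * (1 + 2 * s))%N by lia.
have nB : (K * n <= 4 * D + 2 * (K * s) + 2 * K)%N by lia.
have r1 : (V%:R : rat) <= D%:R + K%:R ^+ 2 + K%:R * (1 + 2 * s%:R).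
  by move: nV; rewrite -(ler_nat rat) !(natrD, natrM) expr2.
have r2 : (n%:R : rat) * s%:R <= 2 * D%:R.
  by move: hnd; rewrite -(ler_nat rat) !natrM.
have r3 : (K%:R : rat) * n%:R <= 4 * D%:R + 2 * (K%:R * s%:R) + 2 * K%:R.
  by move: nB; rewrite -(ler_nat rat) !(natrD, natrM).
have r4 : (n%:R : rat) * ((n%:R - 1) / 2) = m by rewrite /m bin2_rat mulrA.
have r5 : 66 <= delta * (n%:R - 1).
  have hn' : (66 * b + 7)%:R <= (n%:R : rat) by rewrite ler_nat.
  rewrite natrD natrM in hn'.
  have e1 : delta * (1 / delta) = 1 by rewrite mul1r divff // lt0r_neq0.
  have e2 : 0 <= delta * (n%:R - 1 - 66 * b%:R) by apply: mulr_ge0; [exact: ltW | lra].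
  have e3 : 0 <= delta * (b%:R - 1 / delta) by apply: mulr_ge0; [exact: ltW | lra].
  clear -e1 e2 e3; nra.
have m0 : 0 < m.
  rewrite -r4; apply: mulr_gt0; first by rewrite ltr0n; lia.
  have : (7 : rat) <= n%:R by rewrite (ler_nat rat 7 n).
  move=> h; lra.
have r6 : O%:R = eps * m by rewrite /eps divfK // lt0r_neq0.
have r7 : (V%:R : rat) <= m by rewrite /m ler_nat.
have r8 : (D%:R : rat) <= O%:R by rewrite ler_nat.
have r9 : (K%:R : rat) <= n%:R by rewrite ler_nat.
have r0 : (7 : rat) <= n%:R by rewrite (ler_nat rat 7 n).
have r3' : (K%:R : rat) * (n%:R - 2) <= 4 * D%:R + 2 * K%:R * s%:R by lra.
have r4' : m = n%:R * (n%:R - 1) / 2 by rewrite -r4 mulrA.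
have E0 : 0 <= eps by rewrite /eps divr_ge0 // ltW.
exact: (@final_ineq _ _ _ _ _ _ _ _ _ r0 r5 (ler0n _ D) r8 (ler0n _ s) (ler0n _ K) r9 r1 r2 r3' r4' r6 E0 heps r7).
Qed.
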